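(* The following are equivalent. (i) For every $0<\delta\leq 1$ there exists a positive integer $N=\mathrm{DPHJ}(2,2,\delta)$ such that for every $n\geq N$, every subset $A\subseteq W(n,2,2)$ with $|A|\geq\delta\,2^{n^2}$ contains a polynomial combinatorial line of $W(n,2,2)$. (ii) $\lim_{n\to\infty}\Delta^\circ_n(\mathcal{C}^\circ)=0$; that is, every $\mathcal{C}^\circ$-HJ-code $\mathcal{G}\subseteq\mathbb{F}_2^{\binom{[n]}{\leq 2}}$ satisfies $\mathbb{P}[\mathcal{G}]=o_{n\to\infty}(1)$.
   Context: Polynomial words: $W(n,2,2)$ is the set of all maps $w\colon[n]^2\to\{1,2\}$ (it has $2^{n^2}$ elements). A polynomial variable word is a map $v\colon[n]^2\to\{1,2\}\cup\{x\}$ ($x$ a new symbol) such that $v^{-1}(\{x\})=X\times X$ for some nonempty $X\subseteq[n]$; $v(a)$ is obtained by replacing each occurrence of $x$ by $a$. A polynomial combinatorial line is a set $\{v(1),v(2)\}$ for a polynomial variable word $v$. Graphs: $\binom{V}{\leq 2}$ is the set of nonempty subsets of $V$ of size at most 2; a graph on $V$ is a subset of $\binom{V}{\leq 2}$. $V(G)$ is the union of the members of $G$; graphs $G,H$ are isomorphic if there is a bijection $\phi\colon V(G)\to V(H)$ with $\{x,y\}\in G\iff\{\phi(x),\phi(y)\}\in H$ for all $x,y\in V(G)$. Graphs on $[n]$ are identified with elements of $\mathbb{F}_2^{\binom{[n]}{\leq 2}}$; $G_1+G_2$ is symmetric difference; $\mathbb{P}$ is the uniform probability measure. $K_r^\circ=\binom{[r]}{\leq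 2}$, $\mathcal{C}^\circ=\{K_r^\circ:r\geq 1\}$. $\mathcal{G}$ is a $\mathcal{C}^\circ$-HJ-code if for all $G_1,G_2\in\mathcal{G}$ with $G_1\supseteq G_2$, $G_1+G_2$ is not isomorphic to any member of $\mathcal{C}^\circ$. $\Delta^\circ_n(\mathcal{C}^\circ)$ is the maximum of $\mathbb{P}[\mathcal{G}]$ over $\mathcal{C}^\circ$-HJ-codes $\mathcal{G}\subseteq\mathbb{F}_2^{\binom{[n]}{\leq 2}}$. *)

(* Defs.v *)
From HB Require Import structures.
From mathcomp Require Import all_boot all_order all_algebra.
From mathcomp Require Import reals.
Set Implicit Arguments. Unset Strict Implicit. Unset Printing Implicit Defensive.
Import Order.TTheory GRing.Theory Num.Theory.
From mathcomp Require Import boolp.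
Local Open Scope ring_scope.

(* [n] is modelled by 'I_n; the alphabet {1,2} by bool (false = 1, true = 2). *)
Definition word (n : nat) := {ffun 'I_n * 'I_n -> bool}.

(* A polynomial variable word: values in {1,2} ∪ {x}, with x encoded as None,
   such that the preimage of x is X × X for some nonempty X ⊆ [n]. *)
Definition is_poly_var_word (n : nat) (v : {ffun 'I_n * 'I_n -> option bool}) : Prop :=
  exists X : {set 'I_n}, X != set0 /\ [set p | v p == None] = setX X X.

Definition subst_word (n : nat) (v : {ffun 'I_n * 'I_n -> option bool}) (a : bool) : word n :=
  [ffun p => if v p is Some b then b else a].

Definition contains_poly_line (n : nat) (A : {set word n}) : Prop :=
  exists v : {ffun 'I_n * 'I_n -> option bool},
    is_poly_var_word v /\ subst_word v false \in A /\ subst_word v true \in A.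

Definition DPHJ_2_2 (R : realType) : Prop :=
  forall delta : R, 0 < delta <= 1 ->
    exists N : nat, (0 < N)%N /\
      forall n : nat, (N <= n)%N ->
        forall A : {set word n},
          delta * (2 ^+ (n ^ 2)%N) <= (#|A|)%:R -> contains_poly_line A.

Definition edges_le2 (T : finType) : {set {set T}} := [set e : {set T} | (0 < #|e| <= 2)%N].

Definition vertex_set (T : finType) (G : {set {set T}}) : {set T} := \bigcup_(e in G) e.

Definition graph_iso (T U : finType) (G : {set {set T}}) (H : {set {set U}}) : Prop :=
  exists phi : T -> U,
    {in vertex_set G &, injective phi} /\
    phi @: vertex_set G = vertex_set H /\
    (forall x y, x \in vertex_set G -> y \in vertex_set G ->
       ([set x; y] \in G) = ([set phi x; phi y] \in H)).

Definition Kcirc (r : nat) : {set {set 'I_r}} := edges_le2 'I_r.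

Definition iso_to_Ccirc (T : finType) (G : {set {set T}}) : Prop :=
  exists r : nat, (1 <= r)%N /\ graph_iso G (Kcirc r).

(* Symmetric difference (addition in F_2^{binom([n], <=2)}). *)
Definition gsum (T : finType) (G1 G2 : {set {set T}}) : {set {set T}} :=
  (G1 :\: G2) :|: (G2 :\: G1).

Definition is_graph_on (n : nat) (G : {set {set 'I_n}}) : bool := G \subset edges_le2 'I_n.

Definition HJ_code (n : nat) (GG : {set {set {set 'I_n}}}) : Prop :=
  (forall G, G \in GG -> is_graph_on G) /\
  (forall G1 G2, G1 \in GG -> G2 \in GG -> G2 \subset G1 -> ~ iso_to_Ccirc (gsum G1 G2)).

Definition HJ_codeb (n : nat) (GG : {set {set {set 'I_n}}}) : bool :=
  `[< HJ_code GG >].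

Definition Prob (R : realType) (n : nat) (GG : {set {set {set 'I_n}}}) : R :=
  (#|GG|)%:R / (2 ^+ #|edges_le2 'I_n|).

Definition Delta (R : realType) (n : nat) : R :=
  (\max_(GG : {set {set {set 'I_n}}} | HJ_codeb GG) #|GG|)%:R / (2 ^+ #|edges_le2 'I_n|).

Definition Delta_to_zero (R : realType) : Prop :=
  forall eps : R, 0 < eps -> exists N : nat, forall n : nat, (N <= n)%N -> `|Delta R n| < eps.

(* Main.v *)
Require Import Defs.
From mathcomp Require Import all_boot all_order all_algebra.
From mathcomp Require Import reals zify boolp.
Import Order.TTheory GRing.Theory Num.Theory.
Set Implicit Arguments. Unset Strict Implicit. Unset Printing Implicit Defensive.

Lemma edge_repr2 (T : finType) (e : {set T}) : e \in edges_le2 T -> exists a b, e = [set a; b].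
Proof.
rewrite inE => /andP [h1 h2].
have : (#|e| == 1) || (#|e| == 2) by case: #|e| h1 h2 => // [[|[|]]].
case/orP.
  by case/cards1P => x ->; exists x, x; rewrite setUid.
by case/cards2P => x [y [_ ->]]; exists x, y.
Qed.

Lemma set2_edge (T : finType) (a b : T) : [set a; b] \in edges_le2 T.
Proof. by rewrite inE cards2; case: (a != b). Qed.

Lemma vertex_setP (T : finType) (G : {set {set T}}) x :
  reflect (exists2 e, e \in G & x \in e) (x \in vertex_set G).
Proof. exact: bigcupP. Qed.

Lemma iso_of_clique (T : finType) (H : {set {set T}}) (X : {set T}) :
  X != set0 -> (forall e, (e \in H) = [exists a in X, exists b in X, e == [set a; b]]) ->
  iso_to_Ccirc H.
Proof.
move=> /set0Pn [x0 x0X] hH.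
have VX : vertex_set H = X.
  apply/setP => x; apply/vertex_setP/idP.
    case=> e; rewrite hH => /existsP [a /andP [aX /existsP [b /andP [bX /eqP ->]]]].
    by case/set2P => ->.
  move=> xX; exists [set x; x]; last by rewrite set21.
  by rewrite hH; apply/existsP; exists x; rewrite xX; apply/existsP; exists x; rewrite xX eqxx.
have r1 : (1 <= #|X|)%N by rewrite card_gt0; apply/set0Pn; exists x0.
exists #|X|; split => //.
exists (enum_rank_in x0X); rewrite VX; split.
  by move=> x y xX yX; apply: enum_rank_in_inj.
split.
  apply/setP => i; apply/imsetP/bigcupP.
    move=> _; exists [set i; i]; last by rewrite set21.
    exact: set2_edge.
  move=> _; exists (enum_val i); first exact: enum_valP.
  by rewrite enum_valK_in.
move=> x y xX yX; rewrite set2_edge hH.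
by apply/existsP; exists x; rewrite xX; apply/existsP; exists y; rewrite yX eqxx.
Qed.

Lemma clique_of_iso (T : finType) (H : {set {set T}}) :
  (forall e, e \in H -> e \in edges_le2 T) -> iso_to_Ccirc H ->
  vertex_set H != set0 /\
  forall e, (e \in H) = [exists a in vertex_set H, exists b in vertex_set H, e == [set a; b]].
Proof.
move=> Hg [r [r1 [phi [inj [im eq]]]]].
split.
  apply/negP => /eqP V0; move: im; rewrite V0 imset0 => /setP /(_ (Ordinal r1)).
  rewrite inE => /esym /bigcupP; case; exists [set Ordinal r1; Ordinal r1]; first exact: set2_edge.
  by rewrite set21.
move=> e; apply/idP/idP.
  move=> eH; case: (edge_repr2 (Hg _ eH)) => a [b ea].
  have aV : a \in vertex_set H by apply/bigcupP; exists e => //; rewrite ea set21.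
  have bV : b \in vertex_set H by apply/bigcupP; exists e => //; rewrite ea set22.
  by apply/existsP; exists a; rewrite aV; apply/existsP; exists b; rewrite bV ea eqxx.
case/existsP => a /andP [aV /existsP [b /andP [bV /eqP ->]]].
by rewrite eq // set2_edge.
Qed.

Lemma card_part (T U : finType) (f : T -> U) (X : {set T}) :
  #|X| = \sum_(u : U) #|[set x in X | f x == u]|.
Proof.
rewrite -sum1_card (partition_big f predT) //=; apply: eq_bigr => u _.
by rewrite -sum1_card; apply: eq_bigl => x; rewrite inE.
Qed.

Lemma card_fix (T : finType) (c : pred T) (r : {ffun T -> bool}) :
  #|[set w : {ffun T -> bool} | [forall x, c x ==> (w x == r x)]]| = 2 ^ #|[set x | ~~ c x]|.
Proof.
pose F := fun x : T => if c x then pred1 (r x) else predT.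
have -> : [set w : {ffun T -> bool} | [forall x, c x ==> (w x == r x)]] = [set w in family F].
  apply/setP => w; rewrite !inE; apply/forallP/familyP => H x; move: (H x); rewrite /F;
  by case: (c x) => //= /eqP ->.
rewrite cardsE card_family foldrE big_map big_enum /= /F.
rewrite (bigID c) /= big1; last by move=> x ->; rewrite card1.
rewrite mul1n.
transitivity (\prod_(i | ~~ c i) 2); first by apply: eq_bigr => x /negbTE ->; rewrite /= card_bool.
by rewrite prod_nat_const cardsE.
Qed.

Lemma pigeon (I : finType) (a f : I -> nat) S W :
  \sum_i a i = S -> \sum_i f i = W -> 0 < W -> (forall i, f i = 0 -> a i = 0) ->
  exists i, 0 < f i /\ S * f i <= a i * W.
Proof.
move=> hS hW W0 h0.
have [i0 fi0] : exists i, 0 < f i.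
  apply/existsP; move: W0; apply: contraLR; rewrite negb_exists => /forallP H.
  by rewrite -hW -leqNgt leqn0 big1 // => j _; apply/eqP; move: (H j); rewrite -leqNgt leqn0.
case: (boolP [exists i, (0 < f i) && (S * f i <= a i * W)]).
  by move=> /existsP [i /andP [h1 h2]]; exists i.
rewrite negb_exists => /forallP H.
have lt : forall i, a i * W <= S * f i.
  move=> i; move: (H i); case: (posnP (f i)) => [|] fi /=.
    by rewrite (h0 _ fi) mul0n.
  by rewrite -ltnNge => /ltnW.
have : \sum_i a i * W < \sum_i S * f i.
  rewrite (bigD1 i0) //= [X in _ < X](bigD1 i0) //=.
  rewrite -addSn leq_add //; first by move: (H i0); rewrite fi0 /= ltnNge.
  by apply: leq_sum => i _; apply: lt.
by rewrite -big_distrl -big_distrr /= hS hW mulnC ltnn.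
Qed.

Lemma bern (x y t : nat) : x ^ t * (x + t * y) <= (x + y) ^ t * x.
Proof.
elim: t => [|t IH]; first by rewrite !expn0 mul0n addn0 mul1n.
rewrite !expnS.
move: IH; set X := x ^ t; set Y := (x + y) ^ t => IH.
have h1 : X * (x + t * y) * (x + y) <= Y * x * (x + y) by rewrite leq_mul2r IH orbT.
have h2 : x * X * (x + t.+1 * y) <= X * (x + t * y) * (x + y) by nia.
by apply: (leq_trans h2); apply: (leq_trans h1); nia.
Qed.
Section Upper.
Variable n : nat.

Definition upper (w : word n) : {set {set 'I_n}} :=
  [set [set p.1; p.2] | p in [set p : 'I_n * 'I_n | (p.1 <= p.2) && w p]].

Lemma set2_le_inj (a b a' b' : 'I_n) : a <= b -> a' <= b' -> [set a; b] = [set a'; b'] ->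
  a = a' /\ b = b'.
Proof.
move=> hab hab' E.
have ha : a \in [set a'; b'] by rewrite -E set21.
have hb : b \in [set a'; b'] by rewrite -E set22.
have ha' : a' \in [set a; b] by rewrite E set21.
have hb' : b' \in [set a; b] by rewrite E set22.
move: ha hb ha' hb'; rewrite !inE => /orP [] /eqP h1 /orP [] /eqP h2 /orP [] /eqP h3 /orP [] /eqP h4;
  subst => //; split => //; apply/val_inj/eqP; rewrite eqn_leq ?hab ?hab' //=;
  try (by apply: leq_trans hab'); try (by apply: leq_trans hab).
Qed.

Lemma edge_repr (e : {set 'I_n}) : e \in edges_le2 'I_n -> exists a b : 'I_n, a <= b /\ e = [set a; b].
Proof.
move=> /edge_repr2 [a [b ->]]; case: (leqP a b) => h; first by exists a, b.
by exists b, a; rewrite setUC (ltnW h).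
Qed.

Lemma mem_upper w e : (e \in upper w) =
   [exists p : 'I_n * 'I_n, (p.1 <= p.2) && w p && (e == [set p.1; p.2])].
Proof.
apply/imsetP/existsP.
  by case=> p; rewrite inE => /andP [h1 h2] ->; exists p; rewrite h1 h2 eqxx.
by case=> p /andP [/andP [h1 h2] /eqP ->]; exists p; rewrite // inE h1 h2.
Qed.

Lemma upper_sub w : upper w \subset edges_le2 'I_n.
Proof. by apply/subsetP => e /imsetP [p _ ->]; exact: set2_edge. Qed.

Lemma upper_set2 w (a b : 'I_n) : a <= b -> ([set a; b] \in upper w) = w (a, b).
Proof.
move=> hab; rewrite mem_upper; apply/existsP/idP.
  case=> [[a' b']] /andP [/andP [/= h1 h2] /eqP E].
  by case: (set2_le_inj hab h1 E) => -> ->.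
by move=> h; exists (a, b); rewrite hab h eqxx.
Qed.

Definition fib_r (G : {set {set 'I_n}}) : word n := [ffun p => [set p.1; p.2] \in G].

Lemma fiberE (G : {set {set 'I_n}}) : G \subset edges_le2 'I_n ->
  [set w in setT | upper w == G] =
  [set w : word n | [forall p : 'I_n * 'I_n, (p.1 <= p.2) ==> (w p == fib_r G p)]].
Proof.
move=> sG; apply/setP => w; rewrite !inE; apply/eqP/forallP.
  move=> <- [a b]; apply/implyP => /= hab; rewrite ffunE /= upper_set2 //.
move=> H; apply/setP => e; apply/idP/idP.
  case/imsetP => [[a b]]; rewrite inE /= => /andP [hab wab] ->.
  by move: (H (a, b)); rewrite /= hab ffunE /= => /eqP <-.
move=> eG; case: (edge_repr (subsetP sG _ eG)) => a [b [hab ea]].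
by rewrite ea upper_set2 //; move: (H (a, b)); rewrite /= hab ffunE /= => /eqP ->; rewrite -ea.
Qed.

Definition Lc := #|[set p : 'I_n * 'I_n | ~~ (p.1 <= p.2)]|.

Lemma card_fiber (G : {set {set 'I_n}}) : G \subset edges_le2 'I_n ->
  #|[set w in setT | upper w == G]| = 2 ^ Lc.
Proof. by move=> sG; rewrite fiberE // card_fix. Qed.

Lemma card_pre (GG : {set {set {set 'I_n}}}) :
  (forall G, G \in GG -> G \subset edges_le2 'I_n) ->
  #|[set w : word n | upper w \in GG]| = #|GG| * 2 ^ Lc.
Proof.
move=> hG; rewrite (card_part upper).
transitivity (\sum_(G in GG) 2 ^ Lc); last by rewrite sum_nat_const.
rewrite [RHS]big_mkcond /=; apply: eq_bigr => G _.
case: ifP => GG0.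
  rewrite -(card_fiber (hG _ GG0)); apply: eq_card => w; rewrite !inE.
  by case: eqP => [->|]; rewrite ?GG0 ?andbF.
apply: eq_card0 => w; rewrite !inE.
by case: eqP => [->|]; rewrite ?GG0 ?andbF.
Qed.

Lemma card_word : 2 ^ (n ^ 2) = 2 ^ #|edges_le2 'I_n| * 2 ^ Lc.
Proof.
have -> : 2 ^ (n ^ 2) = #|[set w : word n | upper w \in powerset (edges_le2 'I_n)]|.
  have h : #|[set: word n]| = 2 ^ (n ^ 2) by rewrite cardsT card_ffun card_prod !card_ord card_bool mulnn.
  by rewrite -h; apply: eq_card => w; rewrite !inE upper_sub.
by rewrite card_pre ?card_powerset // => G; rewrite inE.
Qed.

End Upper.
Lemma line_pair n (v : {ffun 'I_n * 'I_n -> option bool}) : is_poly_var_word v ->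
  upper (subst_word v false) \subset upper (subst_word v true) /\
  iso_to_Ccirc (gsum (upper (subst_word v true)) (upper (subst_word v false))).
Proof.
case=> X [X0 hX].
have vN : forall p, (v p == None) = (p.1 \in X) && (p.2 \in X).
  by move=> p; move/setP: hX => /(_ p); rewrite !inE.
have sub : upper (subst_word v false) \subset upper (subst_word v true).
  apply/subsetP => e; rewrite !mem_upper => /existsP [p /andP [/andP [h1 h2] h3]].
  apply/existsP; exists p; rewrite h1 h3 andbT /=; move: h2; rewrite !ffunE.
  by case: (v p).
split => //; apply: (iso_of_clique X0) => e.
rewrite /gsum (_ : upper (subst_word v false) :\: _ = set0) ?setU0; last first.
  by apply/eqP; rewrite setD_eq0.
rewrite inE; apply/andP/idP.
  case=> /negP ne2; rewrite mem_upper => /existsP [p /andP [/andP [h1 h2] /eqP ep]].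
  case E : (v p) => [b|].
    exfalso; apply: ne2; rewrite mem_upper; apply/existsP; exists p; rewrite h1 ep eqxx andbT.
    by move: h2; rewrite !ffunE E.
  move/eqP: E; rewrite vN => /andP [a1 a2].
  by apply/existsP; exists p.1; rewrite a1; apply/existsP; exists p.2; rewrite a2 ep eqxx.
case/existsP => a /andP [aX /existsP [b /andP [bX /eqP ->]]].
wlog hab : a b aX bX / a <= b.
  move=> W; case: (leqP a b) => h; first exact: W.
  by rewrite setUC; apply: W => //; apply: ltnW.
have E : v (a, b) = None by apply/eqP; rewrite vN aX bX.
by rewrite !upper_set2 // !ffunE E.
Qed.
Lemma code0 n : HJ_codeb (set0 : {set {set {set 'I_n}}}).
Proof. by apply/asboolP; split => [G|G1 G2]; rewrite inE. Qed.

Lemma dir1 (R : realType) : DPHJ_2_2 R -> Delta_to_zero R.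
Proof.
move=> H eps eps0.
set d : R := Num.min (eps / 2)%R 1%R.
have d0 : (0 < d)%R by rewrite lt_min ltr01 divr_gt0.
have d1 : (d <= 1)%R by rewrite ge_min lexx orbT.
have deps : (d < eps)%R.
  apply: (le_lt_trans (y := (eps / 2)%R)); first by rewrite ge_min lexx.
  by rewrite ltr_pdivrMr // ltr_pMr // ltr1n.
case: (H d) => [|N [N0 HN]]; first by rewrite d0 d1.
exists N => n nN.
rewrite /Delta.
have hpos : (0 < #|[pred GG : {set {set {set 'I_n}}} | HJ_codeb GG]|)%N.
  by apply/card_gt0P; exists set0; rewrite inE code0.
have [GG0 cGG0 eqM] := eq_bigmax_cond (fun GG : {set {set {set 'I_n}}} => #|GG|) hpos.
rewrite (_ : \max_(GG | HJ_codeb GG) #|GG| = #|GG0|); last first.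
  by rewrite -eqM; apply: eq_bigl => G; rewrite inE.
have [cg cc] : HJ_code GG0 by apply/asboolP; move: cGG0; rewrite inE.
have lt : ((#|GG0|)%:R < d * 2 ^+ #|edges_le2 'I_n|)%R.
  rewrite ltNge; apply/negP => hge.
  pose A := [set w : word n | upper w \in GG0].
  have cA : #|A| = (#|GG0| * 2 ^ Lc n)%N by apply: card_pre => G /cg.
  have : (d * 2 ^+ (n ^ 2)%N <= (#|A|)%:R)%R.
    rewrite cA -natrX card_word !natrM mulrA ler_pM2r ?ltr0n ?expn_gt0 //.
    by rewrite natrX.
  case/(HN n nN) => v [pv [v1 v2]].
  have [sub iso] := line_pair pv.
  move: v1 v2; rewrite !inE => v1 v2.
  exact: (cc _ _ v2 v1 sub iso).
rewrite ger0_norm ?divr_ge0 ?ler0n ?exprn_ge0 ?ler0n //.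
rewrite ltr_pdivrMr ?exprn_gt0 ?ltr0n //.
apply: (lt_le_trans lt); rewrite ler_pM2r ?exprn_gt0 ?ltr0n //.
exact: ltW.
Qed.
Section Blocks.
Variables n m : nat.
Local Notation M := m.+1.

Definition inb (j : nat) (i : 'I_n) : bool := i %/ M == j.
Definition inbp j (p : 'I_n * 'I_n) := inb j p.1 && inb j p.2.
Definition pi (i : 'I_n) : 'I_M := inord (i %% M).
Definition zb j (w : word n) : word n := [ffun p => if inbp j p then false else w p].
Definition Sb j : {set word n} :=
  [set w : word n | [forall p : 'I_n * 'I_n, inbp j p ==> (w p == w (p.2, p.1))]].
Definition Fb j (r : word n) : {set word n} := [set w | zb j w == r].
Definition gb j (r : word n) (G : {set {set 'I_M}}) : word n :=
  [ffun p => if inbp j p then [set pi p.1; pi p.2] \in G else r p].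

Lemma emb_lt j (h : j * M + M <= n) (a : 'I_M) : j * M + a < n.
Proof. by apply: leq_trans h; rewrite ltn_add2l. Qed.

Definition emb j (h : j * M + M <= n) (a : 'I_M) : 'I_n := Ordinal (emb_lt h a).

Lemma inb_emb j h a : inb j (@emb j h a).
Proof. by rewrite /inb /= divnMDl // divn_small // addn0. Qed.

Lemma pi_emb j h a : pi (@emb j h a) = a.
Proof. by rewrite /pi /= modnMDl modn_small // inord_val. Qed.

Lemma emb_pi j h i : inb j i -> @emb j h (pi i) = i.
Proof.
move=> /eqP hi; apply: val_inj => /=; rewrite inordK ?ltn_pmod //.
by rewrite {2}(divn_eq i M) hi mulnC.
Qed.

Lemma emb_inj j h : injective (@emb j h).
Proof. by move=> a b E; rewrite -(pi_emb h a) E pi_emb. Qed.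

Lemma zbK j w : zb j (zb j w) = zb j w.
Proof. by apply/ffunP => p; rewrite !ffunE; case: (inbp j p). Qed.

Lemma card_blk j (h : j * M + M <= n) : #|[set p : 'I_n * 'I_n | inbp j p]| = M * M.
Proof.
have -> : [set p : 'I_n * 'I_n | inbp j p] = setX [set i | inb j i] [set i | inb j i].
  by apply/setP => p; rewrite !inE.
rewrite cardsX.
have -> : [set i | inb j i] = (@emb j h) @: setT.
  apply/setP => i; rewrite inE; apply/idP/imsetP.
    by move=> hi; exists (pi i) => //; rewrite emb_pi.
  by case=> a _ ->; exact: inb_emb.
by rewrite card_imset ?cardsT ?card_ord //; exact: emb_inj.
Qed.

Lemma card_Fb j (h : j * M + M <= n) r : zb j r = r -> #|Fb j r| = 2 ^ (M * M).
Proof.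
move=> zr.
have -> : Fb j r = [set w : word n | [forall p, ~~ inbp j p ==> (w p == r p)]].
  apply/setP => w; rewrite !inE; apply/eqP/forallP.
    by move=> <- p; apply/implyP => np; rewrite ffunE (negbTE np).
  move=> H; apply/ffunP => p; rewrite ffunE; case: ifP => hp.
    by rewrite -zr ffunE hp.
  by move: (H p); rewrite hp => /eqP.
rewrite card_fix -(card_blk h); congr (2 ^ _); apply: eq_card => p; by rewrite !inE negbK.
Qed.

Lemma Fb_zb j r w : w \in Fb j r -> zb j r = r.
Proof. by rewrite inE => /eqP <-; rewrite zbK. Qed.

Lemma gb_in j (r : word n) G : zb j r = r -> gb j r G \in Sb j :&: Fb j r.
Proof.
move=> zr; rewrite !inE; apply/andP; split.
  apply/forallP => p; apply/implyP => hp; rewrite !ffunE /inbp /=.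
  by move: hp; rewrite /inbp => /andP [-> ->] /=; rewrite setUC.
apply/eqP/ffunP => p; rewrite !ffunE; case: ifP => hp; first by rewrite -zr ffunE hp.
by rewrite hp.
Qed.

Lemma gb_inj j (h : j * M + M <= n) r :
  {in powerset (edges_le2 'I_M) &, injective (gb j r)}.
Proof.
move=> G G'; rewrite !inE => sG sG' E.
have key : forall a b : 'I_M, ([set a; b] \in G) = ([set a; b] \in G').
  move=> a b; move/ffunP: E => /(_ (emb h a, emb h b)); rewrite !ffunE /inbp /= !inb_emb /=.
  by rewrite !pi_emb.
apply/setP => e; apply/idP/idP => he.
  by case: (edge_repr2 (subsetP sG _ he)) => a [b eab]; rewrite eab -key -eab.
by case: (edge_repr2 (subsetP sG' _ he)) => a [b eab]; rewrite eab key -eab.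
Qed.

Lemma card_SF j (h : j * M + M <= n) r : zb j r = r ->
  2 ^ #|edges_le2 'I_M| <= #|Sb j :&: Fb j r|.
Proof.
move=> zr; rewrite -card_powerset -(card_in_imset (gb_inj (r:=r) h)).
by apply: subset_leq_card; apply/subsetP => w /imsetP [G _ ->]; exact: gb_in.
Qed.

Lemma set2_eq_cases (T : finType) (x y a b : T) : [set x; y] = [set a; b] ->
  (x = a /\ y = b) \/ (x = b /\ y = a).
Proof.
move=> E.
have hx : x \in [set a; b] by rewrite -E set21.
have hy : y \in [set a; b] by rewrite -E set22.
have ha : a \in [set x; y] by rewrite E set21.
have hb : b \in [set x; y] by rewrite E set22.
move: hx hy ha hb; rewrite !inE => /orP [] /eqP hx /orP [] /eqP hy /orP [] /eqP ha /orP [] /eqP hb;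
  subst; by [left | right].
Qed.

Lemma gb_surj j (h : j * M + M <= n) r w : w \in Sb j :&: Fb j r ->
  exists2 G : {set {set 'I_M}}, G \subset edges_le2 'I_M & gb j r G = w.
Proof.
rewrite !inE => /andP [/forallP sym /eqP fw].
exists [set e in edges_le2 'I_M | [exists a, exists b, (e == [set a; b]) && w (emb h a, emb h b)]].
  by apply/subsetP => e; rewrite inE => /andP [].
apply/ffunP => p; rewrite ffunE; case: ifP => hp; last first.
  by rewrite -fw ffunE hp.
move: (hp); rewrite /inbp => /andP [h1 h2].
rewrite inE set2_edge /=; apply/existsP/idP.
  case=> a /existsP [b /andP [/eqP E wab]].
  case: (set2_eq_cases E) => [[e1 e2]|[e1 e2]].
    by move: wab; rewrite -e1 -e2 (emb_pi h h1) (emb_pi h h2) -surjective_pairing.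
  move: wab; rewrite -e1 -e2 (emb_pi h h1) (emb_pi h h2) => wab.
  by move: (sym (p.2, p.1)); rewrite /inbp /= h1 h2 /= wab -surjective_pairing => /eqP <-.
move=> wp; exists (pi p.1); apply/existsP; exists (pi p.2); rewrite eqxx /=.
by rewrite (emb_pi h h1) (emb_pi h h2) -surjective_pairing.
Qed.


Local Notation Q := (2 ^ #|edges_le2 'I_M|).

Lemma inb_neq j k (i : 'I_n) : j != k -> inb j i -> inb k i = false.
Proof. by rewrite /inb => jk /eqP ->; apply/negbTE. Qed.

Lemma Sb_inv j k w : j != k -> (zb k w \in Sb j) = (w \in Sb j).
Proof.
move=> jk; rewrite !inE; apply: eq_forallb => p.
case hp: (inbp j p) => //=; move: hp; rewrite /inbp => /andP [h1 h2].
by rewrite !ffunE /inbp /= (inb_neq jk h1) (inb_neq jk h2).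
Qed.

Definition Bset k : {set word n} := [set w | all (fun j => w \notin Sb j) (iota 0 k)].

Lemma Bset_inv k w : (zb k w \in Bset k) = (w \in Bset k).
Proof.
rewrite !inE; apply: eq_in_all => j; rewrite mem_iota add0n => jk.
by rewrite Sb_inv // neq_ltn; case/andP: jk => _ ->.
Qed.

Lemma BsetS k : Bset k.+1 = Bset k :\: Sb k.
Proof.
apply/setP => w; rewrite !inE -addn1 iotaD all_cat /= andbT andbC add0n.
by rewrite inE.
Qed.

Lemma Bset0 : Bset 0 = setT.
Proof. by apply/setP => w; rewrite !inE. Qed.

Lemma card_words : #|[set: word n]| = 2 ^ (n ^ 2).
Proof. by rewrite cardsT card_ffun card_prod !card_ord card_bool mulnn. Qed.

Lemma step1 k (h : k * M + M <= n) (X : {set word n}) :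
  (forall w, (zb k w \in X) = (w \in X)) ->
  #|X| * Q <= #|X :&: Sb k| * 2 ^ (M * M).
Proof.
move=> inv; rewrite (card_part (zb k) X) (card_part (zb k) (X :&: Sb k)) !big_distrl /=.
apply: leq_sum => r _.
case: (eqVneq [set w in X | zb k w == r] set0) => [->|/set0Pn [w0]]; first by rewrite cards0.
rewrite inE => /andP [w0X /eqP zw0].
have zr : zb k r = r by rewrite -zw0 zbK.
have rX : r \in X by rewrite -zw0 inv.
have E1 : [set w in X | zb k w == r] = Fb k r.
  apply/setP => w; rewrite !inE; case: eqP => [ew|]; last by rewrite andbF.
  by rewrite andbT -inv ew.
have E2 : [set w in X :&: Sb k | zb k w == r] = Sb k :&: Fb k r.
  apply/setP => w; rewrite !inE; case: eqP => [ew|]; last by rewrite !andbF.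
  have : w \in X by rewrite -inv ew.
  by move=> ->; rewrite andbT.
rewrite E1 E2 (card_Fb h zr) mulnC.
by apply: leq_mul => //; apply: card_SF.
Qed.

Lemma Bcount k : k * M <= n ->
  #|Bset k| * (2 ^ (M * M)) ^ k <= (2 ^ (M * M) - Q) ^ k * 2 ^ (n ^ 2).
Proof.
elim: k => [|k IH] hk.
  by rewrite Bset0 card_words !expn0 mul1n muln1.
have h : k * M + M <= n by rewrite addnC -mulSn.
have IH' := IH (leq_trans (leq_addr _ _) h).
rewrite BsetS cardsD.
have s1 := step1 h (@Bset_inv k).
have s2 : #|Bset k :&: Sb k| <= #|Bset k| by apply: subset_leq_card; apply: subsetIl.
move: IH' s1 s2.
set b := #|Bset k|; set c := #|Bset k :&: Sb k|; set T := 2 ^ (M * M).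
set W := 2 ^ (n ^ 2).
rewrite !expnS.
set Y := T ^ k; set Z := (T - Q) ^ k => h1 h2 h3.
have h4 : (b - c) * T <= b * (T - Q) by nia.
have h5 : (b - c) * T * Y <= b * (T - Q) * Y by rewrite leq_mul2r h4 orbT.
apply: (leq_trans (n := b * (T - Q) * Y)); first by move: h5; rewrite mulnA.
move: h5 h4; set D := T - Q => h5 h4.
have h6 : D * (b * Y) <= D * (Z * W) by rewrite leq_mul2l h1 orbT.
by move: h6; rewrite mulnCA !mulnA.
Qed.

Lemma Acount (A : {set word n}) k :
  #|A| <= #|A :&: Bset k| + \sum_(j < k) #|A :&: Sb j|.
Proof.
elim: k => [|k IH]; first by rewrite Bset0 setIT big_ord0 addn0.
apply: (leq_trans IH); rewrite big_ord_recr /= [\sum_(i < k) _ + _]addnC addnA leq_add2r.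
apply: (leq_trans _ (leq_card_setU _ _)); apply: subset_leq_card.
apply/subsetP => w; rewrite BsetS !inE.
by case: (w \in A) => //=; case: [forall p, _] => //= ->.
Qed.

Lemma final_r j (h : j * M + M <= n) (Y : {set word n}) :
  exists r, zb j r = r /\
    #|Y| * 2 ^ (M * M) <= #|[set w in Y | zb j w == r]| * 2 ^ (n ^ 2).
Proof.
have [||||r [fr hr]] := @pigeon _ (fun r => #|[set w in Y | zb j w == r]|) (fun r => #|Fb j r|)
   #|Y| (2 ^ (n ^ 2)).
- by rewrite -card_part.
- rewrite -card_words (card_part (zb j)); apply: eq_bigr => r _.
  by apply: eq_card => w; rewrite !inE.
- by rewrite expn_gt0.
- move=> r /eqP; rewrite cards_eq0 => /eqP F0; apply/eqP; rewrite cards_eq0; apply/eqP/setP => w.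
  rewrite !inE; apply/negbTE; apply/negP => /andP [_ /eqP zw].
  by move/setP: F0 => /(_ w); rewrite !inE zw eqxx.
have [w0 wF] : exists w, w \in Fb j r by apply/set0Pn; rewrite -card_gt0.
have zr := Fb_zb wF.
by exists r; split => //; rewrite -(card_Fb h zr).
Qed.

Lemma edges_le_sq : #|edges_le2 'I_M| <= M * M.
Proof.
apply: (leq_trans (n := #|[set [set p.1; p.2] | p : 'I_M * 'I_M]|)).
  apply: subset_leq_card; apply/subsetP => e /edge_repr2 [a [b ->]].
  by apply/imsetP; exists (a, b).
by apply: (leq_trans (leq_imset_card _ _)); rewrite card_prod card_ord.
Qed.

Lemma line_of_pair j (h : j * M + M <= n) r (A : {set word n}) (G1 G2 : {set {set 'I_M}}) :
  G1 \subset edges_le2 'I_M -> gb j r G1 \in A -> gb j r G2 \in A -> G2 \subset G1 ->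
  iso_to_Ccirc (gsum G1 G2) -> contains_poly_line A.
Proof.
move=> sG1 A1 A2 s21.
rewrite /gsum (_ : G2 :\: G1 = set0) ?setU0; last by apply/eqP; rewrite setD_eq0.
set H := G1 :\: G2 => iso.
have Hg : forall e, e \in H -> e \in edges_le2 'I_M.
  by move=> e; rewrite inE => /andP [_ /(subsetP sG1)].
have [V0 hH] := clique_of_iso Hg iso.
set Y := vertex_set H in V0 hH.
pose X := [set i : 'I_n | inb j i && (pi i \in Y)].
have inH : forall p : 'I_n * 'I_n, p.1 \in X -> p.2 \in X -> [set pi p.1; pi p.2] \in H.
  move=> p; rewrite hH !inE => /andP [_ y1] /andP [_ y2].
  by apply/existsP; exists (pi p.1); rewrite y1; apply/existsP; exists (pi p.2); rewrite y2 eqxx.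
pose v := [ffun p => if (p.1 \in X) && (p.2 \in X) then None else Some (gb j r G2 p)].
exists v; split.
  exists X; split.
    case/set0Pn: V0 => y yY; apply/set0Pn; exists (emb h y).
    by rewrite inE inb_emb pi_emb yY.
  by apply/setP => -[p1 p2]; rewrite inE ffunE in_setX; case: ifP.
have e2 : subst_word v false = gb j r G2.
  apply/ffunP => p; rewrite !ffunE; case: ifP => // /andP [x1 x2].
  move: (x1) (x2); rewrite !inE => /andP [b1 _] /andP [b2 _].
  rewrite /inbp b1 b2 /=; apply/esym/negbTE; move: (inH p x1 x2); rewrite inE.
  by case/andP.
have e1 : subst_word v true = gb j r G1.
  apply/ffunP => p; rewrite !ffunE; case: ifP => [/andP [x1 x2]|nx].
    move: (x1) (x2); rewrite !inE => /andP [b1 _] /andP [b2 _].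
    rewrite /inbp b1 b2 /=; move: (inH p x1 x2); rewrite inE.
    by case/andP.
  case: ifP => // hp.
  have nH : [set pi p.1; pi p.2] \notin H.
    apply/negP; rewrite hH => /existsP [a /andP [aY /existsP [b /andP [bY /eqP E]]]].
    move: nx hp; rewrite /inbp !inE => /negP nx /andP [b1 b2]; apply: nx.
    have p1 : pi p.1 \in [set a; b] by rewrite -E set21.
    have p2 : pi p.2 \in [set a; b] by rewrite -E set22.
    rewrite b1 b2 /=; move: p1 p2; rewrite !inE.
    by case/orP => /eqP ->; case/orP => /eqP ->; rewrite ?aY ?bY.
  move: nH; rewrite inE negb_and negbK.
  case: (boolP ([set pi p.1; pi p.2] \in G2)) => /= eG2; last by move=> /negbTE ->.
  by rewrite (subsetP s21 _ eG2).
by rewrite e1 e2.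
Qed.
End Blocks.
Lemma Bbound b T Qn q P W k : T = Qn * P -> k = q * P -> 0 < Qn -> 0 < P -> 0 < q ->
  b * T ^ k <= (T - Qn) ^ k * W -> b * (1 + q) <= W.
Proof.
move=> hT hk Q0 P0 q0 hb.
have QT : Qn <= T by rewrite hT leq_pmulr.
have k0 : 0 < k by rewrite hk muln_gt0 q0 P0.
have T0 : 0 < T by apply: leq_trans QT.
move: hb; set x := T - Qn => hb.
have Tx : T = x + Qn by rewrite subnK.
have hbern := bern x Qn k; rewrite -Tx in hbern.
case: (posnP x) => x0.
  move: hb; rewrite x0 exp0n // mul0n leqn0 muln_eq0 => /orP [/eqP ->|] //.
  by rewrite expn_eq0 => /andP [/eqP T00]; rewrite T00 in T0.
have h1 : b * x ^ k * (x + k * Qn) <= x ^ k * W * x.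
  apply: (leq_trans (n := b * (T ^ k * x))); first by rewrite -mulnA leq_mul2l hbern orbT.
  by rewrite mulnA leq_mul2r hb orbT.
have h2 : b * (x + k * Qn) <= W * x.
  have xk : 0 < x ^ k by rewrite expn_gt0 x0.
  rewrite -(leq_pmul2l xk); move: h1 xk; set X := x ^ k => h1 xk; nia.
have h3 : q * x <= k * Qn.
  by rewrite hk -mulnA [P * _]mulnC -hT leq_mul2l leq_subr orbT.
have h4 : b * (1 + q) * x <= W * x by nia.
by rewrite leq_pmul2r in h4.
Qed.
From mathcomp Require Import lra.

Lemma dir2 (R : realType) : Delta_to_zero R -> DPHJ_2_2 R.
Proof.
move=> HD δ /andP [d0 d1].
have di0 : (0 <= δ^-1)%R by rewrite invr_ge0 ltW.
set q := Num.Def.archi_bound (δ^-1)%R.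
have hq : (δ^-1 < q%:R)%R := archi_boundP di0.
have q0 : (0 < q)%N by rewrite -(ltr0n R); apply: le_lt_trans hq.
have hdq : (1 < δ * (1 + q%:R))%R.
  have h1 : (1 < δ * q%:R)%R.
    by have h := hq; rewrite -(ltr_pM2l d0) mulfV ?lt0r_neq0 // in h.
  by rewrite mulrDr mulr1; apply: (lt_trans h1); rewrite ltrDr.
have q1 : (0 < 1 + q%:R :> R)%R by rewrite addr_gt0 ?ltr0n.
set u : R := ((1 + q%:R)^-1)%R.
have u_lt : (u < δ)%R by rewrite /u -div1r ltr_pdivrMr.
have u0 : (0 < u)%R by rewrite /u invr_gt0.
set δ' : R := ((δ - u) / q%:R)%R.
have d'0 : (0 < δ')%R by rewrite divr_gt0 ?subr_gt0 ?ltr0n.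
case: (HD δ' d'0) => N0 HN0.
have hD := HN0 N0.+1 (leqnSn _).
have EM := edges_le_sq N0.
set E := #|edges_le2 'I_N0.+1| in EM.
set P := 2 ^ (N0.+1 * N0.+1 - E).
have TQP : 2 ^ (N0.+1 * N0.+1) = 2 ^ E * P by rewrite -expnD subnKC.
set k := q * P.
have k0 : (0 < k)%N by rewrite muln_gt0 q0 expn_gt0.
exists (k * N0.+1); split; first by rewrite muln_gt0 k0.
move=> n hk A hA.
have hB := Bbound TQP (erefl k) (expn_gt0 _ _) (expn_gt0 _ _) q0 (Bcount hk).
have hAc := Acount N0 A k.
have hAB : #|A :&: Bset n N0 k| <= #|Bset n N0 k| by apply: subset_leq_card; apply: subsetIr.
have [j [_ hj]] := @pigeon _ (fun j : 'I_k => #|A :&: Sb n N0 j|) (fun _ => 1%N)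
   (\sum_(j < k) #|A :&: Sb n N0 j|) k erefl ltac:(by rewrite sum1_card card_ord) k0 ltac:(by []).
have hjb : j * N0.+1 + N0.+1 <= n.
  by apply: leq_trans hk; rewrite addnC -mulSn leq_mul2r ltn_ord orbT.
have [r [zr hr]] := final_r hjb (A :&: Sb n N0 j).
set Y := [set w in A :&: Sb n N0 j | zb N0 j w == r] in hr.
set GG := [set G : {set {set 'I_N0.+1}} | (G \subset edges_le2 'I_N0.+1) && (gb j r G \in A)].
have hY : #|Y| <= #|GG|.
  apply: (leq_trans _ (leq_imset_card (gb j r) GG)); apply: subset_leq_card.
  apply/subsetP => w; rewrite inE => /andP [/setIP [wA wS] /eqP zw].
  have wSF : w \in Sb n N0 j :&: Fb N0 j r by rewrite !inE zw eqxx andbT; move: wS; rewrite inE.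
  case: (gb_surj hjb wSF) => G sG gw; apply/imsetP; exists G => //.
  by rewrite inE sG gw wA.
case: (pselect (HJ_code GG)) => [cGG|ncGG]; last first.
  have [G1 [G2 [h1 [h2 [h21 hiso]]]]] : exists G1 G2, G1 \in GG /\ G2 \in GG /\
      G2 \subset G1 /\ iso_to_Ccirc (gsum G1 G2).
    apply: contrapT => nex; apply: ncGG; split.
      by move=> G; rewrite inE => /andP [].
    by move=> G1 G2 h1 h2 h21 hiso; apply: nex; exists G1, G2.
  move: h1 h2; rewrite !inE => /andP [s1 a1] /andP [_ a2].
  exact: (line_of_pair hjb s1 a1 a2 h21 hiso).
exfalso.
have hmax : #|GG| <= \max_(G0 : {set {set {set 'I_N0.+1}}} | HJ_codeb G0) #|G0|.
  by apply: leq_bigmax_cond; apply: asboolT.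
have hN : #|A| * 2 ^ E <= #|Bset n N0 k| * 2 ^ E + q * (#|GG| * 2 ^ (n ^ 2)).
  set s := \sum_(j < k) #|A :&: Sb n N0 j| in hAc hj.
  set a := #|A :&: Sb n N0 j| in hj hr.
  have e1 : a * k * 2 ^ E = q * (a * 2 ^ (N0.+1 * N0.+1)).
    by rewrite TQP /k mulnA [a * q]mulnC -!mulnA [P * _]mulnC.
  have c1 : s * 2 ^ E <= q * (#|GG| * 2 ^ (n ^ 2)).
    rewrite muln1 in hj.
    apply: (leq_trans (n := a * k * 2 ^ E)); first by rewrite leq_mul2r hj orbT.
    rewrite e1 leq_mul2l; apply/orP; right.
    by apply: (leq_trans hr); rewrite leq_mul2r hY orbT.
  apply: (leq_trans (n := (#|Bset n N0 k| + s) * 2 ^ E)).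
    by rewrite leq_mul2r; apply/orP; right; apply: (leq_trans hAc); rewrite leq_add2r.
  by rewrite mulnDl leq_add2l.
set Wr : R := (2 ^+ (n ^ 2)%N)%R.
set Qr : R := (2 ^+ E)%R.
have Wr0 : (0 < Wr)%R by rewrite exprn_gt0.
have Qr0 : (0 < Qr)%R by rewrite exprn_gt0.
have hNr : ((#|A|)%:R * Qr <= (#|Bset n N0 k|)%:R * Qr + q%:R * ((#|GG|)%:R * Wr))%R.
  by rewrite /Qr /Wr -!natrX -!natrM -natrD ler_nat.
have hBr : ((#|Bset n N0 k|)%:R <= Wr * u)%R.
  rewrite /u ler_pdivlMr //.
  have e : (1 + q%:R = (1 + q)%:R :> R)%R by rewrite natrD.
  by rewrite /Wr -natrX e -natrM ler_nat.
have hBQ : ((#|Bset n N0 k|)%:R * Qr <= Wr * u * Qr)%R by rewrite ler_pM2r.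
have hAQ : (δ * Wr * Qr <= (#|A|)%:R * Qr)%R by rewrite ler_pM2r.
have main : ((δ - u) * Qr * Wr <= (#|GG|)%:R * q%:R * Wr)%R by lra.
rewrite ler_pM2r // in main.
have main2 : (δ' * Qr <= (#|GG|)%:R)%R.
  by rewrite /δ' mulrAC ler_pdivrMr ?ltr0n.
move: hD; rewrite /Delta -/Qr ger0_norm ?divr_ge0 ?ler0n ?exprn_ge0 ?ler0n //.
rewrite ltr_pdivrMr // ltNge => /negP; apply.
apply: (le_trans main2); rewrite ler_nat //.
Qed.

Theorem propositionA1 (R : realType) : DPHJ_2_2 R <-> Delta_to_zero R.
Proof. by split; [exact: dir1 | exact: dir2]. Qed.
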